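(* For any $w, w' \in \mathcal{C}\langle A \rangle$ and any integer $M \ge 1$, \[ Z^{\mathcal{S}, \ast}_{q, M}(w \ast_{\hbar} w')=Z^{\mathcal{S}, \ast}_{q, M}(w)\, Z^{\mathcal{S}, \ast}_{q, M}(w'). \]
   Context: Let $\mathcal{C}=\mathbb{Q}[\hbar]$ with $\hbar$ a formal variable, and let $\mathfrak{H}=\mathcal{C}\langle a,b\rangle$ be the non-commutative polynomial ring in $a,b$ over $\mathcal{C}$. For $k\ge 1$ put $g_k=ba^k$. Let $A=\{\hbar b\}\cup\{ba^k\mid k\ge 1\}$, let $\mathcal{C}\langle A\rangle$ be the $\mathcal{C}$-subalgebra of $\mathfrak{H}$ generated by $1$ and $A$, and let $\mathfrak{z}$ be the $\mathcal{C}$-span of $A$. Fix $q\in\mathbb{C}$ with $0<|q|<1$ and regard $\mathbb{C}$ as a $\mathcal{C}$-module with $\hbar$ acting as multiplication by $1-q$. Let $[m]=(1-q^m)/(1-q)$. For $m\ge 1$ let $F_q(m;\cdot):\mathfrak{z}\to\mathbb{C}$ be the $\mathcal{C}$-linear map with $F_q(m;\hbar b)=1-q$ and $F_q(m;g_k)=q^{km}/[m]^k$ for $k\ge1$. For $M\ge 1$ let $Z_{q,M}:\mathcal{C}\langle A\rangle\to\mathbb{C}$ be the $\mathcal{C}$-linear map with $Z_{q,M}(1)=1$ and $Z_{q,M}(u_1\cdots u_r)=\sum_{0<m_1<\cdots<m_r<M}\prod_{i=1}^r F_q(m_i;u_i)$ for $u_1,\dots,u_r\in A$. Let $\circ_\hbar:\mathfrak{z}\times\mathfrak{z}\to\mathfrak{z}$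 be the symmetric $\mathcal{C}$-bilinear map with $(\hbar b)\circ_\hbar(\hbar b)=\hbar\cdot \hbar b$, $(\hbar b)\circ_\hbar g_k=\hbar g_k$, $g_k\circ_\hbar g_l=g_{k+l}$ ($k,l\ge1$). The harmonic product $\ast_\hbar$ on $\mathcal{C}\langle A\rangle$ is the $\mathcal{C}$-bilinear product determined by $w\ast_\hbar 1=1\ast_\hbar w=w$ and $(wu)\ast_\hbar(w'v)=(w\ast_\hbar w'v)u+(wu\ast_\hbar w')v+(w\ast_\hbar w')(u\circ_\hbar v)$ for $w,w'\in\mathcal{C}\langle A\rangle$, $u,v\in A$. Let $\psi^\ast$ be the $\mathcal{C}$-algebra anti-involution of $\mathcal{C}\langle A\rangle$ with $\psi^\ast(\hbar b)=\hbar b$ and $\psi^\ast(ba^k)=b(-a)^k$ for $k\ge1$. Define the $\mathcal{C}$-linear map $w^{\mathcal{S},\ast}_\hbar:\mathcal{C}\langle A\rangle\to\mathcal{C}\langle A\rangle$ by $w^{\mathcal{S},\ast}_\hbar(1)=1$ and $w^{\mathcal{S},\ast}_\hbar(u_1\cdots u_r)=\sum_{i=0}^r (u_1\cdots u_i)\ast_\hbar \psi^\ast(u_{i+1}\cdots u_r)$ for $r\ge1$, $u_1,\dots,u_r\in A$, and set $Z^{\mathcal{S},\ast}_{q,M}=Z_{q,M}\circ w^{\mathcal{S},\ast}_\hbar$. *)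

(* Defs.v *)
From mathcomp Require Import all_boot all_algebra.
From mathcomp Require Import reals complex.
Set Implicit Arguments.
Unset Strict Implicit.
Unset Printing Implicit Defensive.
Import GRing.Theory Num.Theory.
Local Open Scope ring_scope.

(* Coefficient ring  C = Q[hbar];  hbar is 'X. *)
Notation coef := {poly rat}.

(* Letters of the alphabet A:
     0      stands for  hbar b,
     k >= 1 stands for  g_k = b a^k.
   Distinct A-words give C-linearly independent elements of H (each is
   hbar^(#0-letters) times a distinct word in a,b), so C<A> is the free
   C-module on A-words; an element of C<A> is represented by a finite
   formal C-linear combination  sum_i c_i * w_i  (list of pairs). *)
Definition word := seq nat.
Definition elt := seq (coef * word).

(* u o_hbar v = circ_coef u v * (letter u + v):
   (hb)o(hb) = hbar*(hb), (hb)o g_k = hbar*g_k, g_k o g_l = g_(k+l). *)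
Definition circ_coef (u v : nat) : coef :=
  if (u == 0%N) || (v == 0%N) then 'X else 1.

(* Harmonic product of two words, computed on REVERSED words (head = last
   letter), returning reversed words:
   (w u) * (w' v) = (w * w' v) u + (w u * w') v + (w * w') (u o v). *)
Fixpoint hrev (s t : word) {struct s} : elt :=
  match s with
  | [::] => [:: (1, t)]
  | u :: s' =>
    let fix h2 (t : word) : elt :=
      match t with
      | [::] => [:: (1, s)]
      | v :: t' =>
          [seq (p.1, u :: p.2) | p <- hrev s' (v :: t')]
          ++ [seq (p.1, v :: p.2) | p <- h2 t']
          ++ [seq (p.1 * circ_coef u v, (u + v)%N :: p.2) | p <- hrev s' t']
      end in h2 t
  end.

Definition hword (s t : word) : elt :=
  [seq (p.1, rev p.2) | p <- hrev (rev s) (rev t)].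

Definition hprod (x y : elt) : elt :=
  flatten [seq [seq (a.1 * b.1 * p.1, p.2) | p <- hword a.2 b.2]
          | a <- x, b <- y].

(* psi^*: anti-involution, psi(hb) = hb, psi(b a^k) = b(-a)^k = (-1)^k b a^k;
   on a word: reverse and multiply by (-1)^(sum of letters). *)
Definition psi_word (s : word) : coef * word := ((-1) ^+ sumn s, rev s).

Definition wS_word (s : word) : elt :=
  flatten [seq [seq ((psi_word (drop i s)).1 * p.1, p.2)
               | p <- hword (take i s) (psi_word (drop i s)).2]
          | i <- iota 0 (size s).+1].

Definition wS (x : elt) : elt :=
  flatten [seq [seq (a.1 * p.1, p.2) | p <- wS_word a.2] | a <- x].

Section Zeta.
Variable R : realType.
Local Notation CC := (R[i]).

(* C-module structure on the complex numbers: hbar acts as 1 - q *)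
Definition hact (q : CC) (c : coef) : CC := (map_poly ratr c).[1 - q].

Definition qint (q : CC) (m : nat) : CC := (1 - q ^+ m) / (1 - q).

Definition Fq (q : CC) (m : nat) (u : nat) : CC :=
  if u == 0%N then 1 - q else q ^+ (u * m) / (qint q m) ^+ u.

(* Z_{q,M}(u_1...u_r) = sum_{0 < m_1 < ... < m_r < M} prod_i F_q(m_i; u_i) *)
Definition Zword (q : CC) (M : nat) (s : word) : CC :=
  \sum_(m : (size s).-tuple 'I_M | sorted ltn (0%N :: [seq val j | j <- m]))
     \prod_(i < size s) Fq q (tnth m i) (nth 0%N s i).

Definition Zq (q : CC) (M : nat) (x : elt) : CC :=
  \sum_(p <- x) hact q p.1 * Zword q M p.2.

Definition ZSq (q : CC) (M : nat) (x : elt) : CC := Zq q M (wS x).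
End Zeta.

(* Main.v *)
Require Import Defs.
From mathcomp Require Import all_boot all_algebra.
From mathcomp Require Import reals complex.
From mathcomp Require Import zify ring.
Import GRing.Theory Num.Theory.
Local Open Scope ring_scope.

Lemma hrev_nil t : hrev [::] t = [:: (1, t)].
Proof. by []. Qed.
Lemma hrev_cons_nil u s : hrev (u :: s) [::] = [:: (1, u :: s)].
Proof. by []. Qed.
Lemma hrev_cons u s v t : hrev (u :: s) (v :: t) =
  [seq (p.1, u :: p.2) | p <- hrev s (v :: t)]
  ++ [seq (p.1, v :: p.2) | p <- hrev (u :: s) t]
  ++ [seq (p.1 * circ_coef u v, (u + v)%N :: p.2) | p <- hrev s t].
Proof. by []. Qed.

Lemma bigcatK (K : nmodType) (I : Type) (a b : seq I) (F : I -> K) :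
  \sum_(p <- a ++ b) F p = \sum_(p <- a) F p + \sum_(p <- b) F p.
Proof. exact: big_cat. Qed.

Lemma stuffle_abs (K : comPzRingType) (h : coef -> K)
  (h1 : h 1 = 1) (hM : forall a b, h (a * b) = h a * h b)
  (Phi : word -> nat -> K) (G : nat -> nat -> K)
  (P0 : forall n, Phi [::] n = 1) (Pz : forall u w, Phi (u :: w) 0%N = 0)
  (PS : forall u w n, Phi (u :: w) n.+1 = Phi (u :: w) n + G n u * Phi w n)
  (GM : forall n u v, G n u * G n v = h (circ_coef u v) * G n (u + v)%N) :
  forall n x y, \sum_(p <- hrev x y) h p.1 * Phi p.2 n = Phi x n * Phi y n.
Proof.
elim=> [|n IH] [|u s] [|v t].
- by rewrite hrev_nil big_seq1 h1 !P0 !mul1r.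
- by rewrite hrev_nil big_seq1 h1 P0 !mul1r.
- by rewrite hrev_cons_nil big_seq1 h1 P0 !mul1r mulr1.
- rewrite hrev_cons !bigcatK !big_map /= Pz mul0r.
  by rewrite !big1 ?addr0 // => p _; rewrite Pz mulr0.
- by rewrite hrev_nil big_seq1 h1 !P0 !mul1r.
- by rewrite hrev_nil big_seq1 h1 P0 !mul1r.
- by rewrite hrev_cons_nil big_seq1 h1 P0 !mul1r mulr1.
have step : forall (f : coef * word -> coef) w L,
  \sum_(p <- [seq (f p, w :: p.2) | p <- L]) h p.1 * Phi p.2 n.+1 =
  \sum_(p <- [seq (f p, w :: p.2) | p <- L]) h p.1 * Phi p.2 n +
  G n w * \sum_(p <- L) h (f p) * Phi p.2 n.
  move=> f w L; rewrite !big_map mulr_sumr -big_split /=.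
  by apply: eq_bigr => p _; rewrite PS; ring.
rewrite hrev_cons !bigcatK (step (fun p => p.1)) (step (fun p => p.1))
  (step (fun p => p.1 * circ_coef u v)).
have E0 := IH (u :: s) (v :: t); rewrite hrev_cons !bigcatK in E0.
have -> : forall a b c x y z : K, a + x + ((b + y) + (c + z)) = (a + (b + c)) + (x + y + z).
  by move=> *; ring.
rewrite E0.
have E3 : \sum_(p <- hrev s t) h (p.1 * circ_coef u v) * Phi p.2 n =
   h (circ_coef u v) * (Phi s n * Phi t n).
  by rewrite -IH mulr_sumr; apply: eq_bigr => p _; rewrite hM; ring.
rewrite E3 !IH !PS.
have G3 := GM n u v.
transitivity (Phi (u :: s) n * Phi (v :: t) n +
  (G n u * (Phi s n * Phi (v :: t) n) + G n v * (Phi (u :: s) n * Phi t n) +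
   (G n u * G n v) * (Phi s n * Phi t n))); first by rewrite G3; ring.
ring.
Qed.


Fixpoint LL {K : comPzRingType} (H : nat -> nat -> K) (w : word) (a b : nat) : K :=
  match w with
  | [::] => 1
  | u :: w' => \sum_(a <= k < b) H k u * LL H w' k.+1 b
  end.

Fixpoint BB {K : comPzRingType} (H : nat -> nat -> K) (w : word) (a n : nat) : K :=
  match w with
  | [::] => 1
  | u :: w' => \sum_(a <= j < n) H j u * BB H w' a j
  end.

Lemma tri (K : comPzRingType) (f : nat -> nat -> K) a n :
  \sum_(a <= j < n) \sum_(a <= i < j) f i j =
  \sum_(a <= i < n) \sum_(i.+1 <= j < n) f i j.
Proof.
elim: n => [|n IH]; first by rewrite !big_geq.
case: (leqP a n) => han; last first.
  by rewrite !big_geq.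
rewrite [LHS]big_nat_recr //= IH [in RHS]big_nat_recr //=.
rewrite [X in _ = _ + X]big_geq // addr0 -big_split /=.
apply: eq_big_nat => i /andP [_ hi].
by rewrite big_nat_recr.
Qed.

Lemma BB_rcons (K : comPzRingType) (H : nat -> nat -> K) v u a n :
  BB H (rcons v u) a n = \sum_(a <= i < n) H i u * BB H v i.+1 n.
Proof.
elim: v n => [|x v IH] n /=; first by [].
under eq_bigr do rewrite IH mulr_sumr.
rewrite tri; apply: eq_bigr => i _; rewrite mulr_sumr.
by apply: eq_bigr => j _; ring.
Qed.

Lemma BB_rev (K : comPzRingType) (H : nat -> nat -> K) w a n :
  BB H (rev w) a n = LL H w a n.
Proof.
elim: w a => [|u w IH] a //=.
rewrite rev_cons BB_rcons; apply: eq_bigr => i _; by rewrite IH.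
Qed.

Lemma BB_S (K : comPzRingType) (H : nat -> nat -> K) u w a n :
  BB H (u :: w) a n.+1 = BB H (u :: w) a n + (if (a <= n)%N then H n u * BB H w a n else 0).
Proof.
rewrite /=; case: leqP => han; first by rewrite big_nat_recr.
by rewrite !big_geq // ?addr0 // ltnW.
Qed.
Lemma big_tuple_cons (K : nmodType) (T : finType) n (P : pred ((n.+1).-tuple T))
   (F : (n.+1).-tuple T -> K) :
  \sum_(m | P m) F m =
  \sum_(x : T) \sum_(t : n.-tuple T | P [tuple of x :: t]) F [tuple of x :: t].
Proof.
rewrite pair_big_dep /=.
rewrite (reindex (fun p : T * n.-tuple T => [tuple of p.1 :: p.2])) /=.
  by [].
exists (fun m => (thead m, [tuple of behead m])).
  move=> [x t] _ /=; rewrite theadE; congr pair; exact: val_inj.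
by move=> m _ /=; rewrite -tuple_eta.
Qed.

Lemma tuple_LL (K : comPzRingType) (H : nat -> nat -> K) M s c :
  \sum_(m : (size s).-tuple 'I_M | path ltn c [seq val j | j <- m])
     \prod_(i < size s) H (tnth m i) (nth 0%N s i) = LL H s c.+1 M.
Proof.
elim: s c => [|u s IH] c /=.
  rewrite (big_pred1 [tuple]) ?big_ord0 // => m.
  apply/idP/eqP => [_|->] //; apply: val_inj; by case: m => [[]].
rewrite big_tuple_cons /= big_geq_mkord /= [RHS]big_mkcond /=.
apply: eq_bigr => x _.
case: ltnP => hx /=; last by rewrite big_pred0.
rewrite -IH mulr_sumr; apply: eq_bigr => t _.
rewrite big_ord_recl /=; congr (_ * _).
apply: eq_bigr => i _.
by rewrite !(tnth_nth x).
Qed.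

Lemma BB_stuffle (K : comPzRingType) (h : coef -> K)
  (h1 : h 1 = 1) (hM : forall a b, h (a * b) = h a * h b)
  (H : nat -> nat -> K)
  (HM : forall k u v, H k u * H k v = h (circ_coef u v) * H k (u + v)%N) a n x y :
  \sum_(p <- hrev x y) h p.1 * BB H p.2 a n = BB H x a n * BB H y a n.
Proof.
apply: (@stuffle_abs K h h1 hM (fun w n => BB H w a n)
          (fun n u => if (a <= n)%N then H n u else 0)).
- by [].
- by move=> u w /=; rewrite big_geq.
- by move=> u w m; rewrite BB_S; case: ifP => _; rewrite ?mul0r.
- by move=> m u v; case: ifP => _; rewrite ?HM ?mulr0 ?mul0r.
Qed.

Lemma LL_char (K : comPzRingType) (h : coef -> K)
  (h1 : h 1 = 1) (hM : forall a b, h (a * b) = h a * h b)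
  (H : nat -> nat -> K)
  (HM : forall k u v, H k u * H k v = h (circ_coef u v) * H k (u + v)%N) a b s t :
  \sum_(p <- hword s t) h p.1 * LL H p.2 a b = LL H s a b * LL H t a b.
Proof.
rewrite /hword big_map -!BB_rev -(@BB_stuffle K h h1 hM H HM).
by apply: eq_bigr => p _ /=; rewrite -BB_rev revK.
Qed.

Lemma LL_congr (K : comPzRingType) (H H' : nat -> nat -> K) w a b :
  (forall k u, (a <= k < b)%N -> H k u = H' k u) -> LL H w a b = LL H' w a b.
Proof.
elim: w a => [|u w IH] a E //=.
apply: eq_big_nat => k hk; rewrite E // IH // => k' u' /andP [h1 h2].
apply: E; apply/andP; split => //; case/andP: hk => hk1 hk2; lia.
Qed.

Lemma LL_split (K : comPzRingType) (H : nat -> nat -> K) s a m b :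
  (a <= m <= b)%N ->
  LL H s a b = \sum_(0 <= i < (size s).+1) LL H (take i s) a m * LL H (drop i s) m b.
Proof.
elim: s a => [|u s IH] a /andP [ham hmb].
  by rewrite big_nat1 /= mulr1.
rewrite big_nat_recl //= mul1r.
rewrite (big_cat_nat ham hmb) /= addrC; congr (_ + _).
transitivity (\sum_(a <= k < m) H k u * \sum_(0 <= i < (size s).+1)
    LL H (take i s) k.+1 m * LL H (drop i s) m b).
  apply: eq_big_nat => k hk; rewrite (IH k.+1) //.
  by case/andP: hk => _ hk; rewrite hk hmb.
transitivity (\sum_(a <= k < m) \sum_(0 <= i < (size s).+1)
    H k u * (LL H (take i s) k.+1 m * LL H (drop i s) m b)).
  by apply: eq_bigr => k _; rewrite mulr_sumr.
rewrite exchange_big /=; apply: eq_bigr => i _.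
by rewrite mulr_suml; apply: eq_bigr => k _; rewrite mulrA.
Qed.

Lemma sum_refl (K : nmodType) (f : nat -> K) a b c :
  (b <= c.+1)%N ->
  \sum_(a <= k < b) f (c - k)%N = \sum_(c.+1 - b <= j < c.+1 - a) f j.
Proof.
elim: b => [|b IH] hb.
  by rewrite !big_geq // leq_subr.
case: (leqP a b) => hab; last first.
  by rewrite !big_geq //; lia.
rewrite big_nat_recr //= IH; last lia.
rewrite (@big_ltn _ _ _ (c.+1 - b.+1)); last lia.
rewrite [RHS]addrC subSS; congr (_ + _).
by have -> : ((c - b).+1 = c.+1 - b)%N by lia.
Qed.

Lemma LL_reflect (K : comPzRingType) (H H' : nat -> nat -> K) w a b c :
  (b <= c.+1)%N ->
  (forall k u, (a <= k < b)%N -> H k u = H' (c - k)%N u) ->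
  LL H w a b = BB H' w (c.+1 - b) (c.+1 - a).
Proof.
move=> hb; elim: w a => [|u w IH] a E //=.
rewrite -sum_refl //.
apply: eq_big_nat => k hk; rewrite E // IH.
  by have -> : (c.+1 - k.+1 = c - k)%N by lia.
move=> k' u' /andP [h1 h2]; apply: E; case/andP: hk => ? ?; apply/andP; split; lia.
Qed.

Lemma BB_sign (K : comPzRingType) (H : nat -> nat -> K) w a n :
  BB (fun j u => (-1) ^+ u * H j u) w a n = (-1) ^+ (sumn w) * BB H w a n.
Proof.
elim: w n => [|u w IH] n /=; first by rewrite mul1r.
rewrite mulr_sumr; apply: eq_bigr => j _; rewrite IH exprD; ring.
Qed.

Definition Ext {K : comPzRingType} (h : coef -> K) (chi : word -> K) (x : elt) : K :=
  \sum_(p <- x) h p.1 * chi p.2.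

Lemma Ext_mul (K : comPzRingType) (h : coef -> K)
  (hM : forall a b, h (a * b) = h a * h b) (chi : word -> K)
  (Hc : forall s t, \sum_(p <- hword s t) h p.1 * chi p.2 = chi s * chi t) x y :
  Ext h chi (hprod x y) = Ext h chi x * Ext h chi y.
Proof.
rewrite /Ext /hprod !big_flatten /= big_map mulr_suml; apply: eq_bigr => a _.
rewrite big_map mulr_sumr; apply: eq_bigr => b _.
rewrite big_map.
transitivity (h a.1 * h b.1 * \sum_(p <- hword a.2 b.2) h p.1 * chi p.2).
  by rewrite mulr_sumr; apply: eq_bigr => p _ /=; rewrite !hM; ring.
rewrite Hc; ring.
Qed.

Lemma hact1 {R : realType} (q : R[i]) : hact q 1 = 1.
Proof. by rewrite /hact rmorph1 hornerC. Qed.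
Lemma hactM {R : realType} (q : R[i]) a b : hact q (a * b) = hact q a * hact q b.
Proof. by rewrite /hact rmorphM hornerM. Qed.
Lemma hactX {R : realType} (q : R[i]) : hact q 'X = 1 - q.
Proof. by rewrite /hact map_polyX hornerX. Qed.
Lemma hactS {R : realType} (q : R[i]) n : hact q ((-1) ^+ n) = (-1) ^+ n.
Proof. by rewrite /hact rmorphXn rmorphN1 !hornerE. Qed.

Lemma Fq_mul {R : realType} (q : R[i]) k u v :
  Fq q k u * Fq q k v = hact q (circ_coef u v) * Fq q k (u + v)%N.
Proof.
rewrite /Fq /circ_coef; case: u => [|u]; case: v => [|v] /=;
  rewrite ?hactX ?hact1 ?addn0 ?add0n //=.
  by rewrite mulrC.
rewrite mul1r mulnDl !exprD invfM; ring.
Qed.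

Definition HS {R : realType} (q : R[i]) (M : nat) (k u : nat) : R[i] :=
  if (k < M)%N then Fq q k u else (-1) ^+ u * Fq q ((M + M).-1 - k) u.

Lemma HS_mul {R : realType} (q : R[i]) M k u v :
  HS q M k u * HS q M k v = hact q (circ_coef u v) * HS q M k (u + v)%N.
Proof.
rewrite /HS; case: ifP => _; first exact: Fq_mul.
rewrite exprD.
have := Fq_mul q ((M + M).-1 - k) u v => E.
transitivity ((-1) ^+ u * (-1) ^+ v * (Fq q ((M + M).-1 - k) u * Fq q ((M + M).-1 - k) v)).
  by ring.
rewrite E; ring.
Qed.

Lemma Zword_LL {R : realType} (q : R[i]) M s : Zword q M s = LL (Fq q) s 1 M.
Proof. rewrite /Zword -(@tuple_LL _ (Fq q) M s 0).
by [].
Qed.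

Lemma Fq_char {R : realType} (q : R[i]) a b s t :
  \sum_(p <- hword s t) hact q p.1 * LL (Fq q) p.2 a b =
  LL (Fq q) s a b * LL (Fq q) t a b.
Proof. exact: (@LL_char _ _ (hact1 q) (hactM q) _ (Fq_mul q)). Qed.

Lemma ZSw {R : realType} (q : R[i]) M s : (1 <= M)%N ->
  Zq q M (wS_word s) = LL (HS q M) s 1 (M + M).-1.
Proof.
move=> hM.
rewrite /Zq /wS_word big_flatten big_map.
rewrite (@LL_split _ _ s 1 M); last by apply/andP; split => //; lia.
rewrite /index_iota subn0; apply: eq_bigr => i _.
rewrite big_map.
transitivity ((-1) ^+ sumn (drop i s) *
   \sum_(p <- hword (take i s) (rev (drop i s))) hact q p.1 * LL (Fq q) p.2 1 M).
  rewrite mulr_sumr; apply: eq_bigr => p _ /=.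
  by rewrite hactM hactS Zword_LL mulrA.
rewrite Fq_char.
rewrite (@LL_congr _ (HS q M) (Fq q)); last first.
  by move=> k u /andP [_ hk]; rewrite /HS hk.
rewrite (@LL_reflect _ (HS q M) (fun j u => (-1) ^+ u * Fq q j u) _ _ _ (M + M).-1);
  first last.
- by move=> k u /andP [hk _]; rewrite /HS ltnNge hk.
- lia.
have -> : ((M + M).-1.+1 - (M + M).-1 = 1)%N by lia.
have -> : ((M + M).-1.+1 - M = M)%N by lia.
rewrite BB_sign -(@BB_rev _ _ (rev (drop i s))) revK; ring.
Qed.

Theorem proposition4p1 (R : realType) (q : R[i]) :
  0 < `|q| < 1 ->
  forall (w w' : elt) (M : nat), (1 <= M)%N ->
    ZSq q M (hprod w w') = ZSq q M w * ZSq q M w'.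
Proof.
move=> _ w w' M hM.
have E : forall x, ZSq q M x = Ext (hact q) (fun s => LL (HS q M) s 1 (M + M).-1) x.
  move=> x; rewrite /ZSq /Ext /Zq /wS big_flatten /= big_map.
  apply: eq_bigr => a _; rewrite big_map -ZSw // /Zq mulr_sumr.
  by apply: eq_bigr => p _ /=; rewrite hactM mulrA.
rewrite !E; apply: (@Ext_mul _ _ (hactM q)) => s t.
exact: (@LL_char _ _ (hact1 q) (hactM q) _ (HS_mul q M)).
Qed.
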